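(* Let $G_n$, $g_n$ and $A_n$ be as defined in the context. Then for all $n\ge2$, $$A_n=G_n+G_{n-1}=g_{n+1}-g_{n-1}.$$
   Context: $H\times K$ denotes the Cartesian product of graphs. $P_n$ is the path with vertex set $\{1,\dots,n\}$ and $C_4$ is the $4$-cycle. A domino tiling of a finite graph is a perfect matching. $G_n$ is the number of domino tilings of $C_4\times P_n$. $g_n$ is the number of domino tilings of the graph obtained from $C_4\times P_n$ by deleting two adjacent vertices of the copy $C_4\times\{1\}$. $A_n=\frac16\big[(3+\sqrt3)(2+\sqrt3)^n+(3-\sqrt3)(2-\sqrt3)^n\big]$, so that $A_1=3$, $A_2=11$, $A_3=41,\dots$ *)

(* Defs.v *)
From HB Require Import structures.
From mathcomp Require Import all_boot all_order all_algebra all_field.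
Set Implicit Arguments. Unset Strict Implicit. Unset Printing Implicit Defensive.
Import Order.TTheory GRing.Theory Num.Theory.

Definition cyc4_adj (i i' : 'I_4) : bool :=
  (i.+1 %% 4 == i') || (i'.+1 %% 4 == i).

(* Adjacency in the path P_n; vertex k of P_n (1-based) is the ordinal k-1. *)
Definition path_adj n (j j' : 'I_n) : bool := (j.+1 == j') || (j'.+1 == j).

Definition prod_adj n : rel ('I_4 * 'I_n) := fun x y =>
  ((x.2 == y.2) && cyc4_adj x.1 y.1) || ((x.1 == y.1) && path_adj x.2 y.2).

Definition is_perfect_matching (T : finType) (e : rel T) (S : {set T})
    (M : {set {set T}}) : bool :=
  [forall B in M, exists x, exists y,
      [&& e x y, x \in S, y \in S & B == [set x; y]]] &&
  [forall x in S, #|[set B in M | x \in B]| == 1%N].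

(* Number of domino tilings (perfect matchings) of the induced subgraph on S. *)
Definition num_pm (T : finType) (e : rel T) (S : {set T}) : nat :=
  #|[set M : {set {set T}} | is_perfect_matching e S M]|.

Definition Gtil (n : nat) : nat := num_pm (@prod_adj n) [set: 'I_4 * 'I_n].

(* g_n = number of domino tilings of C_4 x P_n with the two adjacent vertices
   (0,1) and (1,1) of the copy C_4 x {1} deleted (g_0 := 0, unused). *)
Definition gtil (n : nat) : nat :=
  match n with
  | 0 => 0
  | n'.+1 => num_pm (@prod_adj n'.+1)
               (~: [set ((ord0 : 'I_4), (ord0 : 'I_n'.+1));
                        ((inord 1 : 'I_4), (ord0 : 'I_n'.+1))])
  end.

Local Open Scope ring_scope.
Definition Aseq (n : nat) : algC :=
  (((3 + sqrtC 3) * (2 + sqrtC 3) ^+ n + (3 - sqrtC 3) * (2 - sqrtC 3) ^+ n) / 6)%R.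

(* Main.v *)
Require Import Defs.
From HB Require Import structures.
From mathcomp Require Import all_boot all_order all_algebra all_field.
From mathcomp Require Import zify ring.
Set Implicit Arguments. Unset Strict Implicit. Unset Printing Implicit Defensive.

Section Gen.
Variables (T : finType) (e : rel T).
Hypothesis esym : symmetric e.
Hypothesis eirr : irreflexive e.

Lemma sum_nat_b (P : pred T) (b : pred T) :
  \sum_(i | P i) (b i : nat) = #|[set i | P i && b i]|.
Proof.
rewrite -sum1dep_card big_mkcondr /=; apply: eq_bigr => i _; by case: (b i).
Qed.

Lemma sum_nat_b' (U : finType) (P : pred U) (b : pred U) :
  \sum_(i | P i) (b i : nat) = #|[set i | P i && b i]|.
Proof.
rewrite -sum1dep_card big_mkcondr /=; apply: eq_bigr => i _; by case: (b i).
Qed.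

Lemma pm_block S M B : is_perfect_matching e S M -> B \in M ->
  exists u v, [/\ e u v, u \in S, v \in S & B = [set u; v]].
Proof.
case/andP=> /forall_inP H _ /H /existsP [u /existsP [v /and4P [h1 h2 h3 /eqP h4]]].
by exists u, v.
Qed.

Lemma pm_cover S M z : is_perfect_matching e S M -> z \in S ->
  #|[set B in M | z \in B]| = 1%N.
Proof. by case/andP=> _ /forall_inP H /H /eqP. Qed.

Lemma pm_uniq S M z B1 B2 : is_perfect_matching e S M -> z \in S ->
  B1 \in M -> B2 \in M -> z \in B1 -> z \in B2 -> B1 = B2.
Proof.
move=> pm zS b1 b2 z1 z2; have /eqP/cards1P [C HC] := pm_cover pm zS.
have : B1 \in [set B in M | z \in B] by rewrite inE b1 z1.
have : B2 \in [set B in M | z \in B] by rewrite inE b2 z2.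
by rewrite HC !inE => /eqP -> /eqP ->.
Qed.

Lemma pm_partner S M x : is_perfect_matching e S M -> x \in S ->
  #|[set y | ((y \in S) && e x y) && ([set x; y] \in M)]| = 1%N.
Proof.
move=> pm xS; have /eqP/cards1P [B0 HB0] := pm_cover pm xS.
have : B0 \in [set B in M | x \in B] by rewrite HB0 set11.
rewrite inE => /andP [B0M xB0].
have [u [v [euv uS vS dB0]]] := pm_block pm B0M.
have [y [exy yS eB0]] : exists y, [/\ e x y, y \in S & B0 = [set x; y]].
  move: xB0; rewrite dB0 !inE => /orP [] /eqP ->.
    by exists v.
  by exists u; rewrite esym setUC.
apply/eqP/cards1P; exists y; apply/setP => w; rewrite !inE.
apply/idP/idP.
  case/andP=> /andP [wS exw] xwM.
  have := pm_uniq pm xS xwM B0M (setU11 _ _) xB0.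
  rewrite eB0 => Hs; have : w \in [set x; y] by rewrite -Hs !inE eqxx orbT.
  rewrite !inE => /orP [/eqP wx|//]; by rewrite wx eirr in exw.
by move/eqP ->; rewrite yS exy -eB0 B0M.
Qed.

Lemma pm_rem S M x y : is_perfect_matching e S M -> [set x; y] \in M ->
  x \in S -> y \in S ->
  is_perfect_matching e (S :\ x :\ y) (M :\ [set x; y]).
Proof.
move=> pm xyM xS yS; apply/andP; split.
  apply/forall_inP => B; rewrite !inE => /andP [nB BM].
  have [u [v [euv uS vS dB]]] := pm_block pm BM.
  have nx : forall w, w \in B -> w \in [set x; y] -> False.
    move=> w wB; rewrite !inE => /orP [] /eqP wE.
      have xB : x \in B by rewrite -wE.
      have E := pm_uniq pm xS BM xyM xB (set21 _ _).
      by rewrite E eqxx in nB.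
    have yB : y \in B by rewrite -wE.
    have E := pm_uniq pm yS BM xyM yB (set22 _ _).
    by rewrite E eqxx in nB.
  apply/existsP; exists u; apply/existsP; exists v; rewrite euv dB eqxx andbT /=.
  have uB : u \in B by rewrite dB !inE eqxx.
  have vB : v \in B by rewrite dB !inE eqxx orbT.
  rewrite !inE uS vS !andbT.
  apply/andP; split; apply/andP; split; apply/negP => /eqP E.
  - by apply: (nx u uB); rewrite E !inE eqxx orbT.
  - by apply: (nx u uB); rewrite E !inE eqxx.
  - by apply: (nx v vB); rewrite E !inE eqxx orbT.
  - by apply: (nx v vB); rewrite E !inE eqxx.
apply/forall_inP => z; rewrite !inE => /andP [zy /andP [zx zS]].
have -> : [set B in M :\ [set x; y] | z \in B] = [set B in M | z \in B].
  apply/setP => B; rewrite !inE.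
  case BE: (B == [set x; y]) => //=; move/eqP: BE => ->.
  rewrite xyM !inE; by rewrite (negbTE zy) (negbTE zx).
by rewrite (pm_cover pm zS).
Qed.

Lemma pm_add S M x y : is_perfect_matching e (S :\ x :\ y) M -> e x y ->
  x \in S -> y \in S ->
  is_perfect_matching e S ([set x; y] |: M).
Proof.
move=> pm exy xS yS.
have bl : forall B w, B \in M -> w \in B -> w \in S :\ x :\ y.
  move=> B w BM wB; have [u [v [euv uS vS dB]]] := pm_block pm BM.
  by move: wB; rewrite dB => /set2P [] ->.
apply/andP; split.
  apply/forall_inP => B; rewrite !inE => /orP [/eqP ->|BM].
    by apply/existsP; exists x; apply/existsP; exists y; rewrite exy xS yS eqxx.
  have [u [v [euv uS vS dB]]] := pm_block pm BM.
  apply/existsP; exists u; apply/existsP; exists v; rewrite euv dB eqxx andbT /=.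
  by move: uS vS; rewrite !inE => /and3P [_ _ ->] /and3P [_ _ ->].
apply/forall_inP => z zS.
case zxy: (z \in [set x; y]).
  apply/cards1P; exists [set x; y]; apply/setP => B; rewrite !inE.
  apply/idP/idP.
    case/andP => /orP [//|BM] zB; have := bl _ _ BM zB.
    by move: zxy; rewrite !inE => /orP [] /eqP ->; rewrite eqxx ?andbF.
  by move/eqP => ->; rewrite eqxx /=; move: zxy; rewrite !inE.
have zS' : z \in S :\ x :\ y.
  by move/negbT: zxy; rewrite !inE zS negb_or andbT andbC.
have -> : [set B in [set x; y] |: M | z \in B] = [set B in M | z \in B].
  apply/setP => B; rewrite !inE.
  case BE: (B == [set x; y]) => //=; move/eqP: BE => ->.
  move: zxy; rewrite !inE => ->; by rewrite andbF.
by rewrite (pm_cover pm zS').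
Qed.

Lemma pm_notin S M x y : is_perfect_matching e (S :\ x :\ y) M -> [set x; y] \notin M.
Proof.
move=> pm; apply/negP => /(pm_block pm) [u [v [_ uS vS E]]].
have : x \in [set u; v] by rewrite -E set21.
by case/set2P => xE; [move: uS | move: vS]; rewrite -xE !inE eqxx /= ?andbF.
Qed.

Lemma num_pm_rec (S : {set T}) (x : T) : x \in S ->
  num_pm e S = \sum_(y | (y \in S) && e x y) num_pm e (S :\ x :\ y).
Proof.
move=> xS; rewrite /num_pm.
set P := [set M | is_perfect_matching e S M].
have -> : #|P| = \sum_(M in P) \sum_(y | (y \in S) && e x y) ([set x; y] \in M : nat).
  rewrite -sum1_card; apply: eq_bigr => M; rewrite inE => pm.
  by rewrite sum_nat_b pm_partner.
rewrite exchange_big /=; apply: eq_bigr => y /andP [yS exy].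
rewrite sum_nat_b'.
have neq : x != y by apply/negP => /eqP E; rewrite E eirr in exy.
set Q := [set M | is_perfect_matching e (S :\ x :\ y) M].
have -> : [set i | (i \in P) && ([set x; y] \in i)] = (fun M => [set x; y] |: M) @: Q.
  apply/setP => M; rewrite !inE; apply/idP/idP.
    case/andP => pm xyM; apply/imsetP; exists (M :\ [set x; y]).
      by rewrite inE; apply: pm_rem.
    by rewrite setD1K.
  case/imsetP => M' /[!inE] pm ->; rewrite setU11 andbT; exact: pm_add.
rewrite card_in_imset // => M1 M2 /[!inE] pm1 pm2 E.
by rewrite -(setU1K (pm_notin pm1)) E setU1K // (pm_notin pm2).
Qed.

Lemma num_pm0 : num_pm e set0 = 1%N.
Proof.
apply/eqP/cards1P; exists set0; apply/setP => M; rewrite !inE.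
apply/idP/idP.
  case/andP => /forall_inP H _; apply/eqP/setP => B; rewrite inE.
  apply/negP => /H /existsP [u /existsP [v]]; by rewrite inE andbF.
move/eqP ->; apply/andP; split; apply/forall_inP => z; by rewrite inE.
Qed.

End Gen.

Lemma ordeqE n (i j : 'I_n) : (i == j) = (nat_of_ord i == nat_of_ord j).
Proof. by []. Qed.

Lemma adj_sym n : symmetric (@prod_adj n).
Proof.
case=> [[i Hi] [j Hj]] [[i' Hi'] [j' Hj']].
rewrite /prod_adj /cyc4_adj /path_adj /= !ordeqE /=; lia.
Qed.

Lemma adj_irr n : irreflexive (@prod_adj n).
Proof.
case=> [[i Hi] [j Hj]]; rewrite /prod_adj /cyc4_adj /path_adj /= !ordeqE /=; lia.
Qed.

Lemma sum_list (T : finType) (P : pred T) (r : seq T) (f : T -> nat) :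
  uniq r -> (forall y, P y = (y \in r)) -> \sum_(y | P y) f y = \sum_(y <- r) f y.
Proof. by move=> ur Hr; rewrite big_uniq //; apply: eq_bigl. Qed.

Definition Sk N (k : nat) (p q : pred nat) : {set 'I_4 * 'I_N.+1} :=
  [set v : 'I_4 * 'I_N.+1 | ((v.2 : nat) == k) && p v.1 || ((v.2 : nat) == k.+1) && q v.1 || (k.+1 < v.2)].
Definition F N k p q := num_pm (@prod_adj N.+1) (Sk N k p q).
Definition vx N (a b : nat) : 'I_4 * 'I_N.+1 := (inord a, inord b).

Definition P1 (a : nat) : pred nat := fun t => t == a.
Definition P2 (a b : nat) : pred nat := fun t => (t == a) || (t == b).
Definition P3 : pred nat := fun t => (t == 1) || (t == 2) || (t == 3).
Definition P0 : pred nat := fun t => false.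

Ltac crunch :=
  rewrite /Sk /vx /P1 /P2 /P3 /P0 /prod_adj /cyc4_adj /path_adj /=; rewrite ?inE /= ?xpair_eqE ?ordeqE ?inordK /=;
  try lia.

Ltac crunchy := let i := fresh "i" in let j := fresh "j" in
  let Hi := fresh "Hi" in let Hj := fresh "Hj" in
  case=> [[i Hi] [j Hj]]; crunch.

Ltac step x r :=
  rewrite /F (num_pm_rec (@adj_sym _) (@adj_irr _) (x := x)); [
  rewrite (@sum_list _ _ r); [rewrite !big_cons big_nil ?addn0 | crunch | crunchy] | crunch].


Ltac fin := congr num_pm; apply/setP; crunchy.

Lemma stepA N k : k < N ->
  F N k predT predT = F N k (P2 2 3) predT + F N k (P2 1 2) predT + F N k P3 P3.
Proof.
move=> hk; step (vx N 0 k) [:: vx N 1 k; vx N 3 k; vx N 0 k.+1].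
rewrite addnA; congr (_ + _ + _); fin.
Qed.

Lemma stepB N k : k < N ->
  F N k P3 P3 = F N k (P1 3) P3 + F N k (P2 2 3) (P2 2 3).
Proof.
move=> hk; step (vx N 1 k) [:: vx N 2 k; vx N 1 k.+1].
congr (_ + _); fin.
Qed.

Lemma stepC N k : k < N -> F N k (P1 3) P3 = F N k.+1 (P2 1 2) predT.
Proof. move=> hk; step (vx N 3 k) [:: vx N 3 k.+1]; fin. Qed.

Lemma stepD N k : k < N ->
  F N k (P2 2 3) (P2 2 3) = F N k.+1 (P2 2 3) predT + F N k (P1 3) (P1 3).
Proof.
move=> hk; step (vx N 2 k) [:: vx N 3 k; vx N 2 k.+1].
congr (_ + _); fin.
Qed.

Lemma stepE N k : k < N -> F N k (P1 3) (P1 3) = F N k.+2 predT predT.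
Proof. move=> hk; step (vx N 3 k) [:: vx N 3 k.+1]; fin. Qed.

Lemma pairA N k i : k < N -> i < 4 ->
  F N k (P2 i (i.+1 %% 4)) predT
  = F N k.+1 predT predT + F N k (P1 (i.+1 %% 4)) (fun t => t != i).
Proof.
move=> hk hi; step (vx N i k) [:: vx N (i.+1 %% 4) k; vx N i k.+1].
congr (_ + _); fin.
Qed.

Lemma pairB N k i : k < N -> i < 4 ->
  F N k (P1 (i.+1 %% 4)) (fun t => t != i) = F N k.+1 (P2 (i.+2 %% 4) (i.+3 %% 4)) predT.
Proof. move=> hk hi; step (vx N (i.+1 %% 4) k) [:: vx N (i.+1 %% 4) k.+1]; fin. Qed.

Lemma lastFull N : F N N predT predT = F N N (P2 2 3) predT + F N N (P2 1 2) predT.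
Proof.
step (vx N 0 N) [:: vx N 1 N; vx N 3 N].
congr (_ + _); fin.
Qed.

Lemma lastPair N i : i < 4 -> F N N (P2 i (i.+1 %% 4)) predT = 1.
Proof.
move=> hi; step (vx N i N) [:: vx N (i.+1 %% 4) N].
transitivity (num_pm (@prod_adj N.+1) set0); [fin | exact: num_pm0].
Qed.

Lemma beyond N : F N N.+1 predT predT = 1.
Proof. rewrite /F; transitivity (num_pm (@prod_adj N.+1) set0); [fin | exact: num_pm0]. Qed.

Fixpoint XYZ (m : nat) : nat * nat * nat :=
  match m with
  | 0 => (1, 0, 0)
  | 1 => (2, 1, 1)
  | m'.+1 => let: (x, y, z) := XYZ m' in (2 * x + 4 * y + z, x + y, x)
  end.
Definition X m := (XYZ m).1.1.
Definition Y m := (XYZ m).1.2.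

Lemma XYZ_S m : XYZ m.+2 = (2 * X m.+1 + 4 * Y m.+1 + X m, X m.+1 + Y m.+1, X m.+1).
Proof.
elim: m => [//|m IH].
rewrite (_ : XYZ m.+3 = let: (x, y, z) := XYZ m.+2 in (2*x+4*y+z, x+y, x)) //.
by rewrite /X /Y IH.
Qed.

Lemma XS m : X m.+2 = 2 * X m.+1 + 4 * Y m.+1 + X m.
Proof. by rewrite /X XYZ_S. Qed.
Lemma YS m : Y m.+2 = X m.+1 + Y m.+1.
Proof. by rewrite {1}/Y XYZ_S. Qed.

Lemma m44 : 4 %% 4 = 0. Proof. by []. Qed.
Lemma m14 : 1 %% 4 = 1. Proof. by []. Qed.
Lemma m24 : 2 %% 4 = 2. Proof. by []. Qed.
Lemma m34 : 3 %% 4 = 3. Proof. by []. Qed.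

Lemma pairstep N k i : k < N -> i < 4 ->
  F N k (P2 i (i.+1 %% 4)) predT
  = F N k.+1 predT predT + F N k.+1 (P2 (i.+2 %% 4) ((i.+2 %% 4).+1 %% 4)) predT.
Proof.
move=> hk hi; rewrite pairA // pairB //.
by rewrite (_ : i.+3 %% 4 = (i.+2 %% 4).+1 %% 4) //; lia.
Qed.

Lemma main N d : d <= N ->
  F N (N - d) predT predT = X d.+1 /\
  (forall i, i < 4 -> F N (N - d) (P2 i (i.+1 %% 4)) predT = Y d.+1).
Proof.
elim/ltn_ind: d => d IH hd.
case: d IH hd => [|d] IH hd.
  rewrite subn0; split; last by move=> i hi; rewrite lastPair.
  have h2 := lastPair N (i := 2) isT; have h1 := lastPair N (i := 1) isT.
  rewrite ?m44 ?m14 ?m24 ?m34 in h1 h2.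
  by rewrite lastFull h1 h2.
have hk2 : F N (N - d.+1).+2 predT predT = X d.
  case: d IH hd => [|d] IH hd.
    rewrite (_ : (N - 1).+2 = N.+1); [exact: beyond | lia].
  have hdN : d <= N by lia.
  have h := (IH d (ltnW (ltnSn _)) hdN).1.
  by rewrite (_ : (N - d.+2).+2 = N - d) //; lia.
have ek : N - d = (N - d.+1).+1 by lia.
have hk : N - d.+1 < N by lia.
move: (IH d (ltnSn d) (ltnW hd)) hk2; rewrite ek; set k := N - d.+1 => -[IX IY] hk2.
split.
  rewrite stepA //.

  rewrite stepB // stepC // stepD // stepE // hk2.
  have p2 := pairstep (k := k) (i := 2) hk isT; have p1 := pairstep (k := k) (i := 1) hk isT.
  rewrite ?m44 ?m14 ?m24 ?m34 in p1 p2.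
  rewrite p1 p2.
  have y0 := IY 0 isT; have y1 := IY 1 isT; have y2 := IY 2 isT; have y3 := IY 3 isT.
  rewrite ?m44 ?m14 ?m24 ?m34 in y0 y1 y2 y3.
  rewrite IX y0 y1 y2 y3 XS.
  lia.
move=> i hi; rewrite pairstep // IX IY; last by rewrite ltn_mod.
by rewrite YS.
Qed.
Import GRing.Theory Num.Theory.

Lemma G_X N : Gtil N.+1 = X N.+1.
Proof.
have [h _] := main (leqnn N); rewrite subnn in h; rewrite -h /Gtil /F.
congr num_pm; apply/setP; crunchy.
Qed.

Lemma g_Y N : gtil N.+1 = Y N.+1.
Proof.
have [_ h] := main (leqnn N); rewrite subnn in h.
have := h 2 isT; rewrite m34 => <-; rewrite /gtil /F.
congr num_pm; apply/setP; crunchy.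
Qed.

Lemma Brec j : X j.+3 + X j.+2 + (X j.+1 + X j) = 4 * (X j.+2 + X j.+1).
Proof.
have h1 := XS j.+1; have h2 := YS j; have h3 := XS j. lia.
Qed.

Local Open Scope ring_scope.

Lemma Arec j : Aseq j.+2 = 4 * Aseq j.+1 - Aseq j.
Proof.
rewrite /Aseq; set s := sqrtC 3.
have hs : s ^+ 2 = 3 by rewrite /s sqrtCK.
have ha : (2 + s) * (2 + s) = 4 * (2 + s) - 1 by rewrite -expr2 sqrrD hs; ring.
have hb : (2 - s) * (2 - s) = 4 * (2 - s) - 1 by rewrite -expr2 sqrrB hs; ring.
have Ea : (2 + s) ^+ j.+2 = 4 * (2 + s) ^+ j.+1 - (2 + s) ^+ j.
  by rewrite !exprS mulrA ha; ring.
have Eb : (2 - s) ^+ j.+2 = 4 * (2 - s) ^+ j.+1 - (2 - s) ^+ j.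
  by rewrite !exprS mulrA hb; ring.
rewrite Ea Eb; field; by [].
Qed.

Lemma A1 : Aseq 1 = 3.
Proof.
rewrite /Aseq; set s := sqrtC 3.
have hs : s ^+ 2 = 3 by rewrite /s sqrtCK.
rewrite !expr1 (_ : (3 + s) * (2 + s) + (3 - s) * (2 - s) = 12 + 2 * s ^+ 2); last by ring.
rewrite hs (_ : (12 + 2 * 3 : algC) = 3 * 6); last by ring.
by rewrite mulfK // pnatr_eq0.
Qed.

Lemma A2 : Aseq 2 = 11.
Proof.
rewrite /Aseq; set s := sqrtC 3.
have hs : s ^+ 2 = 3 by rewrite /s sqrtCK.
rewrite (_ : (3 + s) * (2 + s) ^+ 2 + (3 - s) * (2 - s) ^+ 2 = 24 + 14 * s ^+ 2); last by ring.
rewrite hs (_ : (24 + 14 * 3 : algC) = 11 * 6); last by ring.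
by rewrite mulfK // pnatr_eq0.
Qed.

Lemma AB j : Aseq j.+1 = (X j.+1 + X j)%N%:R.
Proof.
elim/ltn_ind: j => j IH.
case: j IH => [|[|j]] IH; first by rewrite A1.
  by rewrite A2.
rewrite Arec IH // IH //.
apply: (addIr ((X j.+1 + X j)%N%:R)).
rewrite subrK -natrM -natrD; congr (_%:R).
by rewrite -Brec.
Qed.

Theorem mainTheorem3 (n : nat) (hn : (2 <= n)%N) :
  Aseq n = ((Gtil n + Gtil n.-1)%N)%:R /\
  Aseq n = (gtil n.+1)%:R - (gtil n.-1)%:R.
Proof.
case: n hn => [|[|m]] // _.
rewrite (G_X m.+1) (G_X m) (g_Y m.+2) (g_Y m) AB; split => //.
apply/eqP; rewrite eq_sym subr_eq -natrD; apply/eqP; congr (_%:R).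
rewrite !YS; lia.
Qed.
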